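(* Let $x\in\mathbb{R}^n$ and let $m(y)=c+g^T(y-x)+\tfrac12(y-x)^TH(y-x)$ with $c\in\mathbb{R}$, $g\in\mathbb{R}^n$, $H\in\mathbb{R}^{n\times n}$ symmetric. Let $\Delta>0$. (a) Suppose $f:\mathbb{R}^n\to\mathbb{R}$ is bounded below and continuously differentiable with $\nabla f$ Lipschitz with constant $L_{\nabla f}$, and there is $\kappa>0$ with $|m(y)-f(x)-\nabla f(x)^T(y-x)|\le\kappa\Delta^2$ for all $y\in B(x,\Delta)$. Then for every $\kappa_H\ge\|H\|$, for all $y\in B(x,\Delta)$: $|m(y)-f(y)|\le\kappa_{\mathrm{mf}}\Delta^2$ and $\|\nabla m(y)-\nabla f(y)\|\le\kappa_{\mathrm{mg}}\Delta$, where $\kappa_{\mathrm{mf}}=\kappa+\frac{L_{\nabla f}}{2}$ and $\kappa_{\mathrm{mg}}=2\kappa+L_{\nabla f}+2\kappa_H$. (b) Suppose $f:\mathbb{R}^n\to\mathbb{R}$ is bounded below and twice continuously differentiable with $\nabla^2 f$ Lipschitz with constant $L_{\nabla^2 f}$, and there is $\kappa>0$ with $\left|m(y)-f(x)-\nabla f(x)^T(y-x)-\tfrac12(y-x)^T\nabla^2 f(x)(y-x)\right|\le\kappa\Delta^3$ for all $y\in B(x,\Delta)$. Then for all $y\in B(x,\Delta)$: $|m(y)-f(y)|\le\kappa_{\mathrm{mf}}\Delta^3$, $\|\nabla m(y)-\nabla f(y)\|\le\kappa_{\mathrm{mg}}\Delta^2$, $\|\nabla^2 m(y)-\nabla^2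 f(y)\|\le\kappa_{\mathrm{mh}}\Delta$, with $\kappa_{\mathrm{mf}}=\kappa+\frac{L_{\nabla^2 f}}{6}$, $\kappa_{\mathrm{mg}}=34\kappa+\frac{L_{\nabla^2 f}}{2}$, $\kappa_{\mathrm{mh}}=24\kappa+L_{\nabla^2 f}$.
   Context: Norms are Euclidean (operator 2-norm for matrices); $B(x,\Delta)=\{y:\|y-x\|\le\Delta\}$. *)

(* Defs.v *)
From HB Require Import structures.
From mathcomp Require Import all_boot all_order all_algebra.
From mathcomp Require Import boolp classical_sets reals.
Set Implicit Arguments. Unset Strict Implicit. Unset Printing Implicit Defensive.
Import Order.TTheory GRing.Theory Num.Theory.
Local Open Scope ring_scope.
Local Open Scope classical_set_scope.

Section Defs.
Variables (R : realType) (n : nat).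

Definition dotv (u v : 'cV[R]_n) : R := \sum_(i < n) u i 0 * v i 0.

Definition enorm (v : 'cV[R]_n) : R := Num.sqrt (dotv v v).

Definition opnorm (A : 'M[R]_n) : R :=
  sup [set enorm (A *m v) | v in [set v : 'cV[R]_n | enorm v <= 1]].

Definition inball (x : 'cV[R]_n) (D : R) (y : 'cV[R]_n) : Prop :=
  enorm (y - x) <= D.

Definition is_gradient (f : 'cV[R]_n -> R) (g : 'cV[R]_n) (y : 'cV[R]_n) : Prop :=
  forall eps : R, 0 < eps -> exists2 del : R, 0 < del &
    forall h : 'cV[R]_n, enorm h <= del ->
      `|f (y + h) - f y - dotv g h| <= eps * enorm h.

Definition is_jacobian (F : 'cV[R]_n -> 'cV[R]_n) (A : 'M[R]_n) (y : 'cV[R]_n) : Prop :=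
  forall eps : R, 0 < eps -> exists2 del : R, 0 < del &
    forall h : 'cV[R]_n, enorm h <= del ->
      enorm (F (y + h) - F y - A *m h) <= eps * enorm h.

Definition qmodel (x : 'cV[R]_n) (c : R) (g : 'cV[R]_n) (H : 'M[R]_n)
  (y : 'cV[R]_n) : R :=
  c + dotv g (y - x) + 2^-1 * dotv (y - x) (H *m (y - x)).

(* its gradient g + H (y - x) (H symmetric) and Hessian H *)
Definition qmodel_grad (x : 'cV[R]_n) (g : 'cV[R]_n) (H : 'M[R]_n)
  (y : 'cV[R]_n) : 'cV[R]_n := g + H *m (y - x).

End Defs.

(* Main.v *)
Require Import Defs.
From HB Require Import structures.
From mathcomp Require Import all_boot all_order all_algebra.
From mathcomp Require Import boolp classical_sets reals.
From mathcomp Require Import topology normedtype derive.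
From mathcomp Require Import ring lra.
Import Order.TTheory GRing.Theory Num.Theory.
Import numFieldNormedType.Exports.
Set Implicit Arguments. Unset Strict Implicit. Unset Printing Implicit Defensive.
Local Open Scope ring_scope.
Local Open Scope classical_set_scope.

Section S.
Variable R : realType.

Definition hasder (f : R -> R) (df t : R) : Prop :=
  forall e : R, 0 < e -> exists2 d : R, 0 < d &
    forall h : R, `|h| <= d -> `|f (t + h) - f t - h * df| <= e * `|h|.

Lemma hasder_is_derive f df t : hasder f df t -> is_derive t 1 f df.
Proof.
move=> hd.
have cv : (fun h : R => h^-1 *: ((f \o shift t) (h *: 1) - f t)) @ 0^' --> df.
  apply/cvgrPdist_le => e e0.
  have [d d0 Hd] := hd e e0.
  near=> h.
  have h0 : h != 0 by near: h; exact: nbhs_dnbhs_neq.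
  have hd' : `|h| <= d.
    near: h; apply: nbhs_dnbhs; exists d => //= z; rewrite /ball /= sub0r normrN; exact: ltW.
  rewrite /= /shift. have -> : h%:A = h :> R by rewrite /GRing.scale /= mulr1. rewrite [h + t]addrC.
  have -> : df - h^-1 *: (f (t + h) - f t) = - h^-1 * (f (t + h) - f t - h * df).
    by rewrite /GRing.scale /=; field.
  rewrite normrM normrN normfV ler_pdivrMl ?normr_gt0 // [_ * e]mulrC; exact: Hd.
apply: DeriveDef; first exact: (cvgP _ cv).
exact: cvg_lim cv.
Unshelve. all: by end_near.
Qed.

Lemma cmp_le (v dv : R -> R) a b : a <= b ->
  (forall t, hasder v (dv t) t) -> (forall t, a <= t <= b -> dv t <= 0) -> v b <= v a.
Proof.
move=> ab hv hdv.
have id (t : R) : is_derive t (1:R) v (dv t) by apply: hasder_is_derive.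
have cont : {within `[a, b], continuous v}.
  apply: derivable_within_continuous => z _; exact: ex_derive.
have [c cab E] := MVT_segment ab (fun x _ => id x) cont.
rewrite -subr_le0 E; apply: mulr_le0_ge0; last by rewrite subr_ge0.
by apply: hdv; rewrite !(itvP cab).
Qed.



Lemma hasder_ext f f' df df' t : hasder f df t -> (forall s, f s = f' s) -> df = df' ->
  hasder f' df' t.
Proof.
move=> hd ff <- e e0; have [d d0 Hd] := hd e e0; exists d => // h hh.
by rewrite -!ff; apply: Hd.
Qed.

Lemma hasder_add f g df dg t : hasder f df t -> hasder g dg t ->
  hasder (fun s => f s + g s) (df + dg) t.
Proof.
move=> hf hg e e0.
have e2 : 0 < e / 2 by rewrite divr_gt0.
have [d1 d10 H1] := hf _ e2; have [d2 d20 H2] := hg _ e2.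
exists (Num.min d1 d2); first by rewrite lt_min d10 d20.
move=> h; rewrite le_min => /andP [hd1 hd2].
have := H1 _ hd1; have := H2 _ hd2.
have -> : f (t + h) + g (t + h) - (f t + g t) - h * (df + dg) =
  (f (t + h) - f t - h * df) + (g (t + h) - g t - h * dg) by ring.
move=> A B; apply: (le_trans (ler_normD _ _)); lra.
Qed.

Lemma hasder_scale k f df t : hasder f df t -> hasder (fun s => k * f s) (k * df) t.
Proof.
move=> hf e e0.
have ke : 0 < e / (`|k| + 1) by rewrite divr_gt0 // ltr_pwDr.
have [d d0 Hd] := hf _ ke; exists d => // h /Hd A.
have -> : k * f (t + h) - k * f t - h * (k * df) = k * (f (t + h) - f t - h * df) by ring.
rewrite normrM; apply: (le_trans (ler_wpM2l (normr_ge0 _) A)).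
by rewrite mulrA ler_wpM2r // mulrCA ger_pMr // ler_pdivrMr ?ltr_pwDr // mul1r lerDl ler01 //.
Qed.

Lemma hasder_opp f df t : hasder f df t -> hasder (fun s => - f s) (- df) t.
Proof.
move=> hf; apply: (hasder_ext (hasder_scale (-1) hf)) => [s|]; ring.
Qed.

Lemma hasder_cst c t : hasder (fun _ => c) 0 t.
Proof. move=> e e0; exists 1 => // h _; rewrite !subrr mulr0 subrr normr0 mulr_ge0 //; exact: ltW. Qed.

Lemma hasder_id t : hasder (fun s => s) 1 t.
Proof. move=> e e0; exists 1 => // h _; rewrite (_ : _ - _ = 0); last by ring.
rewrite normr0 mulr_ge0 //; exact: ltW. Qed.

Lemma hasder_sq t : hasder (fun s => s ^+ 2) (2 * t) t.
Proof.
move=> e e0; exists e => // h he.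
rewrite (_ : _ - _ = h * h); last by ring.
by rewrite normrM mulrC ler_wpM2r.
Qed.

Lemma hasder_cube t : hasder (fun s => s ^+ 3) (3 * t ^+ 2) t.
Proof.
move=> e e0.
have q : 0 < 3 * `|t| + 1 by rewrite ltr_pwDr // mulr_ge0.
exists (Num.min 1 (e / (3 * `|t| + 1))); first by rewrite lt_min ltr01 divr_gt0.
move=> h; rewrite le_min => /andP [h1 h2].
rewrite (_ : _ - _ = h * (h * (3 * t + h))); last by ring.
rewrite normrM mulrC ler_wpM2r // normrM.
have : `|3 * t + h| <= 3 * `|t| + 1.
  apply: (le_trans (ler_normD _ _)); rewrite normrM (ger0_norm (_ : 0 <= 3)) //; lra.
move: h2; rewrite ler_pdivlMr // => h2 A.
apply: le_trans h2; apply: ler_wpM2l => //.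
Qed.
Lemma cmp_abs (v dv w dw : R -> R) a b : a <= b ->
  (forall t, hasder v (dv t) t) -> (forall t, hasder w (dw t) t) ->
  (forall t, a <= t <= b -> `|dv t| <= dw t) -> `|v b - v a| <= w b - w a.
Proof.
move=> ab hv hw hb.
have h1 : (v b - w b) <= (v a - w a).
  apply: (@cmp_le (fun s => v s - w s) (fun s => dv s - dw s)) => // [t|t /hb].
    exact: hasder_add (hv t) (hasder_opp (hw t)).
  move=> H; have := ler_norm (dv t); lra.
have h2 : (- v b - w b) <= (- v a - w a).
  apply: (@cmp_le (fun s => - v s - w s) (fun s => - dv s - dw s)) => // [t|t /hb].
    exact: hasder_add (hasder_opp (hv t)) (hasder_opp (hw t)).
  move=> H; have := ler_norm (- dv t); rewrite normrN; lra.
rewrite ler_norml; apply/andP; split; lra.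
Qed.
End S.

Section V.
Variables (R : realType) (n : nat).
Implicit Types (u v w : 'cV[R]_n) (A : 'M[R]_n).

Lemma dotvC u v : dotv u v = dotv v u.
Proof. by apply: eq_bigr => i _; rewrite mulrC. Qed.

Lemma dotvDl u v w : dotv (u + v) w = dotv u w + dotv v w.
Proof. by rewrite /dotv -big_split; apply: eq_bigr => i _; rewrite mxE mulrDl. Qed.

Lemma dotvDr u v w : dotv w (u + v) = dotv w u + dotv w v.
Proof. by rewrite dotvC dotvDl !(dotvC w). Qed.

Lemma dotvZl (a : R) u v : dotv (a *: u) v = a * dotv u v.
Proof. by rewrite /dotv mulr_sumr; apply: eq_bigr => i _; rewrite mxE mulrA. Qed.

Lemma dotvZr (a : R) u v : dotv u (a *: v) = a * dotv u v.
Proof. by rewrite dotvC dotvZl dotvC. Qed.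

Lemma dotvNl u v : dotv (- u) v = - dotv u v.
Proof. by rewrite -scaleN1r dotvZl mulN1r. Qed.

Lemma dotvNr u v : dotv u (- v) = - dotv u v.
Proof. by rewrite dotvC dotvNl dotvC. Qed.

Lemma dotvBl u v w : dotv (u - v) w = dotv u w - dotv v w.
Proof. by rewrite dotvDl dotvNl. Qed.

Lemma dotvBr u v w : dotv w (u - v) = dotv w u - dotv w v.
Proof. by rewrite dotvDr dotvNr. Qed.

Lemma dotv0l v : dotv 0 v = 0.
Proof. by rewrite /dotv big1 // => i _; rewrite mxE mul0r. Qed.

Lemma dotv0r v : dotv v 0 = 0.
Proof. by rewrite dotvC dotv0l. Qed.

Lemma dotv_ge0 v : 0 <= dotv v v.
Proof. by apply: sumr_ge0 => i _; rewrite -expr2 sqr_ge0. Qed.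

Lemma enorm_ge0 v : 0 <= enorm v.
Proof. exact: sqrtr_ge0. Qed.

Lemma enorm_sq v : enorm v ^+ 2 = dotv v v.
Proof. by rewrite sqr_sqrtr // dotv_ge0. Qed.

Lemma enorm_eq0 v : enorm v = 0 -> v = 0.
Proof.
move=> /eqP; rewrite sqrtr_eq0 => hle.
have h0 : dotv v v = 0 by apply/eqP; rewrite eq_le hle dotv_ge0.
move/eqP: h0; rewrite psumr_eq0 => [/allP hv|i _]; last by rewrite -expr2 sqr_ge0.
apply/matrixP => i j; rewrite (ord1 j) mxE.
by have := hv i (mem_index_enum _); rewrite -expr2 sqrf_eq0 => /eqP.
Qed.

Lemma enorm0 : enorm (0 : 'cV[R]_n) = 0.
Proof. by rewrite /enorm dotv0l sqrtr0. Qed.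

Lemma enormZ (a : R) v : enorm (a *: v) = `|a| * enorm v.
Proof.
rewrite /enorm dotvZl dotvZr mulrA -expr2 sqrtrM ?sqr_ge0 //.
by rewrite sqrtr_sqr.
Qed.

Lemma enormN v : enorm (- v) = enorm v.
Proof. by rewrite -scaleN1r enormZ normrN normr1 mul1r. Qed.

Lemma CS u v : `|dotv u v| <= enorm u * enorm v.
Proof.
have [a0|] := eqVneq (enorm u) 0.
  by rewrite (enorm_eq0 a0) dotv0l normr0 mulr_ge0 ?enorm_ge0.
have [b0|] := eqVneq (enorm v) 0.
  by rewrite (enorm_eq0 b0) dotv0r normr0 mulr_ge0 ?enorm_ge0.
move=> bn0 an0.
have a0 : 0 < enorm u by rewrite lt_def an0 enorm_ge0.
have b0 : 0 < enorm v by rewrite lt_def bn0 enorm_ge0.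
have e1 := dotv_ge0 (enorm v *: u - enorm u *: v).
have e2 := dotv_ge0 (enorm v *: u + enorm u *: v).
rewrite !(dotvDl, dotvDr, dotvNl, dotvNr, dotvZl, dotvZr) in e1 e2.
rewrite -!enorm_sq (dotvC v u) in e1 e2.
set a := enorm u in a0 e1 e2 *; set b := enorm v in b0 e1 e2 *.
set d := dotv u v in e1 e2 *.
have p0 : 0 < a * b by rewrite mulr_gt0.
have f1 : 0 <= (a * b) * (2 * (a * b - d)).
  by apply: (le_trans e1); rewrite le_eqVlt; apply/orP; left; apply/eqP; ring.
have f2 : 0 <= (a * b) * (2 * (a * b + d)).
  by apply: (le_trans e2); rewrite le_eqVlt; apply/orP; left; apply/eqP; ring.
rewrite pmulr_rge0 // in f1; rewrite pmulr_rge0 // in f2.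
rewrite ler_norml; apply/andP; split; lra.
Qed.

Lemma enormD u v : enorm (u + v) <= enorm u + enorm v.
Proof.
have h : dotv (u + v) (u + v) <= (enorm u + enorm v) ^+ 2.
  rewrite dotvDl !dotvDr (dotvC v u) -(enorm_sq u) -(enorm_sq v).
  have := CS u v; have := ler_norm (dotv u v); nra.
rewrite -[X in _ <= X]ger0_norm ?addr_ge0 ?enorm_ge0 // -sqrtr_sqr.
by rewrite {1}/enorm ler_sqrt ?sqr_ge0.
Qed.

Lemma enormB u v : enorm (u - v) <= enorm u + enorm v.
Proof. by rewrite -(enormN v) enormD. Qed.

Lemma dotv_mx u A v : dotv u (A *m v) = dotv (A^T *m u) v.
Proof.
rewrite /dotv; under eq_bigr do rewrite mxE big_distrr.
rewrite exchange_big; apply: eq_bigr => j _ /=; rewrite mxE big_distrl.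
by apply: eq_bigr => i _; rewrite !mxE mulrCA mulrA.
Qed.

Lemma mx_entry_dot A v i : (A *m v) i 0 = dotv (row i A)^T v.
Proof. by rewrite mxE /dotv; apply: eq_bigr => j _; rewrite !mxE. Qed.

Lemma opnorm_has_sup A :
  has_sup [set enorm (A *m v) | v in [set v : 'cV[R]_n | enorm v <= 1]].
Proof.
split; first by exists (enorm (A *m 0)), 0 => //=; rewrite enorm0 ler01.
exists (Num.sqrt (\sum_i dotv (row i A)^T (row i A)^T)).
move=> _ [v /= hv <-]; rewrite /enorm ler_sqrt; last first.
  by apply: sumr_ge0 => i _; apply: dotv_ge0.
apply: ler_sum => i _; rewrite -expr2 mx_entry_dot.
have := CS (row i A)^T v; rewrite -!enorm_sq => h.
have h2 : `|dotv (row i A)^T v| ^+ 2 <= (enorm (row i A)^T * enorm v) ^+ 2.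
  by rewrite ler_pXn2r ?nnegrE ?mulr_ge0 ?enorm_ge0.
rewrite -real_normK ?num_real //; apply: (le_trans h2).
rewrite exprMn ler_piMr ?sqr_ge0 //.
by rewrite expr_le1 ?enorm_ge0.
Qed.

Lemma opnorm_ge0 A : 0 <= opnorm A.
Proof.
apply: (sup_upper_bound (opnorm_has_sup A)); exists 0 => /=.
  by rewrite enorm0 ler01.
by rewrite mulmx0 enorm0.
Qed.

Lemma opnorm_bound A v : enorm (A *m v) <= opnorm A * enorm v.
Proof.
have [a0|an0] := eqVneq (enorm v) 0.
  by rewrite (enorm_eq0 a0) mulmx0 enorm0 mulr0.
have a0 : 0 < enorm v by rewrite lt_def an0 enorm_ge0.
have Ex : [set enorm (A *m v) | v in [set v : 'cV[R]_n | enorm v <= 1]]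
    (enorm (A *m ((enorm v)^-1 *: v))).
  exists ((enorm v)^-1 *: v) => //=.
  by rewrite enormZ ger0_norm ?invr_ge0 ?enorm_ge0 // mulVf.
have := sup_upper_bound (opnorm_has_sup A) Ex.
rewrite -/(opnorm A) -scalemxAr enormZ ger0_norm ?invr_ge0 ?enorm_ge0 //.
by rewrite ler_pdivrMl // mulrC.
Qed.

Lemma opnorm_le A M : (forall v, enorm v <= 1 -> enorm (A *m v) <= M) -> opnorm A <= M.
Proof.
move=> h; apply: ge_sup; first by exists (enorm (A *m 0)), 0 => //=; rewrite enorm0 ler01.
by move=> _ [v /= hv <-]; apply: h.
Qed.


Lemma symq_bound A M : (forall u v, dotv u (A *m v) = dotv v (A *m u)) ->
  (forall v, `|dotv v (A *m v)| <= M * enorm v ^+ 2) ->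
  forall v, enorm (A *m v) <= M * enorm v.
Proof.
move=> sym q v.
have [a0|an0] := eqVneq (enorm v) 0.
  by rewrite (enorm_eq0 a0) mulmx0 enorm0 mulr0.
have a0 : 0 < enorm v by rewrite lt_def an0 enorm_ge0.
have M0 : 0 <= M.
  by have := le_trans (normr_ge0 _) (q v); rewrite pmulr_lge0 // exprn_gt0.
set r := enorm (A *m v).
have [r0|rn0] := eqVneq r 0; first by rewrite r0 mulr_ge0 ?enorm_ge0.
have r0 : 0 < r by rewrite lt_def rn0 enorm_ge0.
set a := enorm v in a0 an0 *.
set w := (a / r) *: (A *m v).
have wn : enorm w = a.
  by rewrite enormZ ger0_norm ?divr_ge0 ?enorm_ge0 // -/r divfK.
have wAv : dotv w (A *m v) = a * r.
  rewrite dotvZl -enorm_sq -/r; field; exact: rn0.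
have pol : 4 * dotv w (A *m v) =
    dotv (w + v) (A *m (w + v)) - dotv (w - v) (A *m (w - v)).
  rewrite mulmxDr mulmxBr !(dotvDl, dotvDr, dotvNl, dotvNr) (sym v w); ring.
have par : enorm (w + v) ^+ 2 + enorm (w - v) ^+ 2 = 4 * a ^+ 2.
  rewrite !enorm_sq !(dotvDl, dotvDr, dotvNl, dotvNr) (dotvC v w) -!enorm_sq wn -/a; ring.
have q1 := q (w + v); have q2 := q (w - v).
have s1 := ler_norm (dotv (w + v) (A *m (w + v))).
have s2 := ler_norm (- dotv (w - v) (A *m (w - v))); rewrite normrN in s2.
have e : M * enorm (w + v) ^+ 2 + M * enorm (w - v) ^+ 2 = 4 * (M * a ^+ 2).
  by rewrite -mulrDr par; ring.
have h4 : a * r <= a * (M * a).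
  have : 4 * (a * r) <= 4 * (M * a ^+ 2) by rewrite -wAv pol; lra.
  rewrite (_ : a * (M * a) = M * a ^+ 2); last by ring.
  lra.
by rewrite ler_pM2l // in h4.
Qed.

Lemma dual_bound (b : 'cV[R]_n) (D K : R) : 0 < D -> (forall s : 'cV[R]_n, enorm s <= D -> `|dotv b s| <= K) ->
  enorm b * D <= K.
Proof.
move=> D0 h.
have K0 : 0 <= K by have := h 0; rewrite enorm0 dotv0r normr0; apply; exact: ltW.
have [a0|an0] := eqVneq (enorm b) 0; first by rewrite a0 mul0r.
have a0 : 0 < enorm b by rewrite lt_def an0 enorm_ge0.
have := h ((D / enorm b) *: b).
rewrite enormZ ger0_norm ?divr_ge0 ?enorm_ge0 ?(ltW D0) // divfK // lexx dotvZr -enorm_sq.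
rewrite (_ : D / enorm b * enorm b ^+ 2 = enorm b * D); last by field.
by rewrite ger0_norm ?mulr_ge0 ?enorm_ge0 ?(ltW D0) //; apply.
Qed.

Lemma quad_scale A (D K : R) : 0 < D ->
  (forall s : 'cV[R]_n, enorm s <= D -> `|dotv s (A *m s)| <= K) ->
  forall v, `|dotv v (A *m v)| <= K / D ^+ 2 * enorm v ^+ 2.
Proof.
move=> D0 h v.
have K0 : 0 <= K by have := h 0; rewrite enorm0 mulmx0 dotv0r normr0; apply; exact: ltW.
have [a0|an0] := eqVneq (enorm v) 0.
  by rewrite (enorm_eq0 a0) dotv0l normr0 enorm0 expr0n mulr0.
have a0 : 0 < enorm v by rewrite lt_def an0 enorm_ge0.
have := h ((D / enorm v) *: v).
rewrite enormZ ger0_norm ?divr_ge0 ?enorm_ge0 ?(ltW D0) // divfK // lexx.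
rewrite -scalemxAr dotvZl dotvZr mulrA normrM ger0_norm ?mulr_ge0 ?divr_ge0 ?enorm_ge0 ?(ltW D0) //.
move=> /(_ isT) hh.
have c0 : 0 < D / enorm v * (D / enorm v) by rewrite mulr_gt0 ?divr_gt0.
have e : K / D ^+ 2 * enorm v ^+ 2 = (D / enorm v * (D / enorm v))^-1 * K.
  by field; rewrite !gt_eqF.
by rewrite e -(ler_pM2l c0) mulVKf ?gt_eqF.
all: by rewrite invr_ge0 enorm_ge0.
Qed.

End V.


Section L.
Variables (R : realType) (n : nat).
Implicit Types (u v w p s : 'cV[R]_n) (A : 'M[R]_n).

Lemma line_hasder (F : 'cV[R]_n -> R) (Lf : 'cV[R]_n -> R) p s (t : R) :
  (forall e : R, 0 < e -> exists2 d : R, 0 < d & forall H : 'cV[R]_n, enorm H <= d ->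
     `|F (p + t *: s + H) - F (p + t *: s) - Lf H| <= e * enorm H) ->
  (forall h : R, Lf (h *: s) = h * Lf s) ->
  hasder (fun r => F (p + r *: s)) (Lf s) t.
Proof.
move=> hF lin e e0.
have q0 : 0 < enorm s + 1 by rewrite ltr_pwDr ?enorm_ge0.
have [d d0 Hd] := hF (e / (enorm s + 1)) (divr_gt0 e0 q0).
exists (d / (enorm s + 1)); first by rewrite divr_gt0.
move=> h hh.
have hs : enorm (h *: s) <= d.
  rewrite enormZ; apply: (le_trans (y := `|h| * (enorm s + 1))).
    by rewrite ler_wpM2l // lerDl.
  by rewrite -ler_pdivlMr.
have := Hd _ hs; rewrite scalerDl addrA lin enormZ => H1.
apply: (le_trans H1).
rewrite mulrCA [e * `|h|]mulrC ler_wpM2l // mulrAC ler_pdivrMr // ler_wpM2l ?(ltW e0) // lerDl //.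
Qed.


Lemma line_f (f : 'cV[R]_n -> R) (gf : 'cV[R]_n -> 'cV[R]_n) p s (t : R) :
  (forall q, is_gradient f (gf q) q) ->
  hasder (fun r => f (p + r *: s)) (dotv (gf (p + t *: s)) s) t.
Proof.
move=> hg; apply: (line_hasder (Lf := dotv (gf (p + t *: s)))) => [e e0|h].
  exact: hg.
exact: dotvZr.
Qed.

Lemma line_g (gf : 'cV[R]_n -> 'cV[R]_n) (Hf : 'cV[R]_n -> 'M[R]_n) w p s (t : R) :
  (forall q, is_jacobian gf (Hf q) q) ->
  hasder (fun r => dotv w (gf (p + r *: s))) (dotv w (Hf (p + t *: s) *m s)) t.
Proof.
move=> hj; apply: (line_hasder (F := fun y => dotv w (gf y)) (Lf := fun H => dotv w (Hf (p + t *: s) *m H))) => [e e0|h].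
  have q0 : 0 < enorm w + 1 by rewrite ltr_pwDr ?enorm_ge0.
  have [d d0 Hd] := hj (p + t *: s) (e / (enorm w + 1)) (divr_gt0 e0 q0).
  exists d => // H hH.
  rewrite -!dotvBr; apply: (le_trans (CS _ _)).
  apply: (le_trans (ler_wpM2l (enorm_ge0 _) (Hd _ hH))).
  rewrite mulrA ler_wpM2r ?enorm_ge0 // mulrCA ger_pMr //.
  by rewrite ler_pdivrMr // mul1r lerDl.
by rewrite -scalemxAr dotvZr.
Qed.

Lemma grad_line_bound (gf : 'cV[R]_n -> 'cV[R]_n) (L : R) p s (t : R) w :
  (forall y z, enorm (gf y - gf z) <= L * enorm (y - z)) -> 0 <= t ->
  `|dotv w (gf (p + t *: s)) - dotv w (gf p)| <= L * t * enorm s * enorm w.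
Proof.
move=> hL t0; rewrite -dotvBr; apply: (le_trans (CS _ _)).
rewrite mulrC ler_wpM2r ?enorm_ge0 //; apply: (le_trans (hL _ _)).
by rewrite addrC addKr enormZ ger0_norm // mulrA.
Qed.

Lemma taylor1 (f : 'cV[R]_n -> R) (gf : 'cV[R]_n -> 'cV[R]_n) (L : R) p s :
  (forall q, is_gradient f (gf q) q) ->
  (forall y z, enorm (gf y - gf z) <= L * enorm (y - z)) -> 0 <= L ->
  `|f (p + s) - f p - dotv (gf p) s| <= L / 2 * enorm s ^+ 2.
Proof.
move=> hg hL L0.
set K := L * enorm s ^+ 2.
move: (@cmp_abs _ (fun r => f (p + r *: s) + - (dotv (gf p) s * r))
   (fun r => dotv (gf (p + r *: s)) s + - (dotv (gf p) s * 1))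
   (fun r => K / 2 * r ^+ 2) (fun r => K / 2 * (2 * r)) 0 1 ler01
   (fun t => hasder_add (line_f p s t hg) (hasder_opp (hasder_scale _ (hasder_id t))))
   (fun t => hasder_scale _ (hasder_sq t))).
rewrite /= scale1r scale0r addr0 !mulr0 !mulr1 => H.
have B : forall t, 0 <= t <= 1 ->
    `|dotv (gf (p + t *: s)) s - dotv (gf p) s| <= K / 2 * (2 * t).
  move=> t /andP [t0 t1]; rewrite (dotvC (gf _)) (dotvC (gf p)).
  apply: (le_trans (grad_line_bound _ _ _ hL t0)).
  by rewrite /K le_eqVlt; apply/orP; left; apply/eqP; field.
have {H B} HB := H B.
rewrite (_ : f (p + s) - f p - dotv (gf p) s = f (p + s) - dotv (gf p) s - (f p - 0)); last by ring.
by apply: (le_trans HB); rewrite /K le_eqVlt; apply/orP; left; apply/eqP; rewrite /=; field.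
Qed.

Lemma hess_line_bound (Hf : 'cV[R]_n -> 'M[R]_n) (L : R) p s (t : R) w u :
  (forall y z, opnorm (Hf y - Hf z) <= L * enorm (y - z)) -> 0 <= t ->
  `|dotv w (Hf (p + t *: s) *m u) - dotv w (Hf p *m u)| <= L * t * enorm s * enorm u * enorm w.
Proof.
move=> hL t0; rewrite -dotvBr -mulmxBl; apply: (le_trans (CS _ _)).
rewrite mulrC ler_wpM2r ?enorm_ge0 //; apply: (le_trans (opnorm_bound _ _)).
rewrite ler_wpM2r ?enorm_ge0 //; apply: (le_trans (hL _ _)).
by rewrite addrC addKr enormZ ger0_norm // mulrA.
Qed.

Lemma taylorG (gf : 'cV[R]_n -> 'cV[R]_n) (Hf : 'cV[R]_n -> 'M[R]_n) (L : R) p s :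
  (forall q, is_jacobian gf (Hf q) q) ->
  (forall y z, opnorm (Hf y - Hf z) <= L * enorm (y - z)) -> 0 <= L ->
  enorm (gf (p + s) - gf p - Hf p *m s) <= L / 2 * enorm s ^+ 2.
Proof.
move=> hj hL L0.
set r := gf (p + s) - gf p - Hf p *m s.
set K := enorm r * L * enorm s ^+ 2.
move: (@cmp_abs _ (fun t => dotv r (gf (p + t *: s)) + - (dotv r (Hf p *m s) * t))
  (fun t => dotv r (Hf (p + t *: s) *m s) + - (dotv r (Hf p *m s) * 1))
  (fun t => K / 2 * t ^+ 2) (fun t => K / 2 * (2 * t)) 0 1 ler01
  (fun t => hasder_add (line_g r p s t hj) (hasder_opp (hasder_scale _ (hasder_id t))))
  (fun t => hasder_scale _ (hasder_sq t))).
rewrite /= scale1r scale0r addr0 !mulr0 !mulr1 => H.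
have B : forall t, 0 <= t <= 1 ->
    `|dotv r (Hf (p + t *: s) *m s) - dotv r (Hf p *m s)| <= K / 2 * (2 * t).
  move=> t /andP [t0 t1]; apply: (le_trans (hess_line_bound _ _ _ _ hL t0)).
  by rewrite /K le_eqVlt; apply/orP; left; apply/eqP; field.
have {H B} HB := H B.
have e : dotv r (gf (p + s)) - dotv r (Hf p *m s) - (dotv r (gf p) - 0) = enorm r ^+ 2.
  by rewrite enorm_sq {4}/r !dotvBr; ring.
rewrite e ger0_norm ?sqr_ge0 // in HB.
have HB' : enorm r ^+ 2 <= enorm r * (L / 2 * enorm s ^+ 2).
  by apply: (le_trans HB); rewrite /K le_eqVlt; apply/orP; left; apply/eqP; rewrite /=; field.
have [r0|rn0] := eqVneq (enorm r) 0.
  by rewrite r0 mulr_ge0 ?divr_ge0 ?sqr_ge0.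
have r0 : 0 < enorm r by rewrite lt_def rn0 enorm_ge0.
by rewrite expr2 ler_pM2l in HB'.
Qed.

Lemma le_norm_eq (a a' b b' : R) : a = a' -> b' = b -> `|a'| <= b' -> `|a| <= b.
Proof. by move=> -> ->. Qed.

Lemma taylor2 (f : 'cV[R]_n -> R) (gf : 'cV[R]_n -> 'cV[R]_n) (Hf : 'cV[R]_n -> 'M[R]_n)
    (L : R) p s :
  (forall q, is_gradient f (gf q) q) ->
  (forall q, is_jacobian gf (Hf q) q) ->
  (forall y z, opnorm (Hf y - Hf z) <= L * enorm (y - z)) -> 0 <= L ->
  `|f (p + s) - f p - dotv (gf p) s - 2^-1 * dotv s (Hf p *m s)| <= L / 6 * enorm s ^+ 3.
Proof.
move=> hg hj hL L0.
set K := L * enorm s ^+ 3.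
have step1 : forall tau, 0 <= tau <= 1 ->
    `|dotv s (gf (p + tau *: s)) - dotv s (Hf p *m s) * tau - dotv s (gf p)| <= K / 2 * tau ^+ 2.
  move=> tau /andP [tau0 tau1].
  move: (@cmp_abs _ (fun t => dotv s (gf (p + t *: s)) + - (dotv s (Hf p *m s) * t))
    (fun t => dotv s (Hf (p + t *: s) *m s) + - (dotv s (Hf p *m s) * 1))
    (fun t => K / 2 * t ^+ 2) (fun t => K / 2 * (2 * t)) 0 tau tau0
    (fun t => hasder_add (line_g s p s t hj) (hasder_opp (hasder_scale _ (hasder_id t))))
    (fun t => hasder_scale _ (hasder_sq t))).
  rewrite /= scale0r addr0 !mulr0 !mulr1 => H.
  have B : forall t, 0 <= t <= tau ->
      `|dotv s (Hf (p + t *: s) *m s) - dotv s (Hf p *m s)| <= K / 2 * (2 * t).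
    move=> t /andP [t0 t1]; apply: (le_trans (hess_line_bound _ _ _ _ hL t0)).
    by rewrite /K le_eqVlt; apply/orP; left; apply/eqP; field.
  have {H B} HB := H B.
  by apply: (le_norm_eq _ _ HB) => /=; ring.
move: (@cmp_abs _ (fun t => f (p + t *: s) + - (dotv (gf p) s * t)
       + - (dotv s (Hf p *m s) / 2 * t ^+ 2))
   (fun t => dotv (gf (p + t *: s)) s + - (dotv (gf p) s * 1)
       + - (dotv s (Hf p *m s) / 2 * (2 * t)))
   (fun t => K / 6 * t ^+ 3) (fun t => K / 6 * (3 * t ^+ 2)) 0 1 ler01
   (fun t => hasder_add (hasder_add (line_f p s t hg) (hasder_opp (hasder_scale _ (hasder_id t))))
       (hasder_opp (hasder_scale _ (hasder_sq t))))
   (fun t => hasder_scale _ (hasder_cube t))).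
rewrite /= scale1r scale0r addr0 => H.
have B : forall t, 0 <= t <= 1 ->
    `|dotv (gf (p + t *: s)) s - dotv (gf p) s * 1 - dotv s (Hf p *m s) / 2 * (2 * t)|
      <= K / 6 * (3 * t ^+ 2).
  move=> t ht; apply: (le_norm_eq _ _ (step1 t ht)); last by field.
  by rewrite !(dotvC s); field.
have {H B} HB := H B.
by apply: (le_norm_eq _ _ HB) => /=; rewrite /K; field.
Qed.

Lemma small0 (X C : R) : 0 <= C -> (forall t, 0 < t -> `|X| <= t * C) -> X = 0.
Proof.
move=> C0 H; apply/eqP; rewrite -normr_eq0; apply/negPn/negP => hX.
have X0 : 0 < `|X| by rewrite lt_def hX normr_ge0.
have q : 0 < 2 * (C + 1) by rewrite mulr_gt0 // ltr_pwDr.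
have := H (`|X| / (2 * (C + 1))) (divr_gt0 X0 q).
rewrite mulrAC ler_pdivlMr //; nra.
Qed.

Lemma D2_bound (f : 'cV[R]_n -> R) (gf : 'cV[R]_n -> 'cV[R]_n) (Hf : 'cV[R]_n -> 'M[R]_n)
    (L : R) p h k :
  (forall q, is_gradient f (gf q) q) ->
  (forall q, is_jacobian gf (Hf q) q) ->
  (forall y z, opnorm (Hf y - Hf z) <= L * enorm (y - z)) -> 0 <= L ->
  `|f (p + h + k) - f (p + h) - f (p + k) + f p - dotv k (Hf p *m h)| <=
    L / 2 * enorm h ^+ 2 * enorm k + L / 2 * enorm h * enorm k ^+ 2 + L / 3 * enorm k ^+ 3.
Proof.
move=> hg hj hL L0.
have E1 := taylor2 (p + h) k hg hj hL L0.
have E2 := taylor2 p k hg hj hL L0.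
have G := taylorG p h hj hL L0.
have G1 := le_trans (CS k (gf (p + h) - gf p - Hf p *m h)) (ler_wpM2l (enorm_ge0 k) G).
have G2 := hess_line_bound p h k k hL (@ler01 R).
rewrite scale1r in G2.
move: E1 E2 G1 G2.
set e1 := f (p + h + k) - _ - _ - _.
set e2 := f (p + k) - _ - _ - _.
set a := dotv k (gf (p + h) - gf p - Hf p *m h).
set b := dotv k (Hf (p + h) *m k) - dotv k (Hf p *m k).
have -> : f (p + h + k) - f (p + h) - f (p + k) + f p - dotv k (Hf p *m h) =
    e1 - e2 + a + 2^-1 * b.
  rewrite /e1 /e2 /a /b !dotvBr !(dotvC k); ring.
rewrite !ler_norml => /andP [e1l e1r] /andP [e2l e2r] /andP [al ar] /andP [bl br].
apply/andP; split; nra.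
Qed.

Lemma hess_sym (f : 'cV[R]_n -> R) (gf : 'cV[R]_n -> 'cV[R]_n) (Hf : 'cV[R]_n -> 'M[R]_n)
    (L : R) p u v :
  (forall q, is_gradient f (gf q) q) ->
  (forall q, is_jacobian gf (Hf q) q) ->
  (forall y z, opnorm (Hf y - Hf z) <= L * enorm (y - z)) -> 0 <= L ->
  dotv v (Hf p *m u) = dotv u (Hf p *m v).
Proof.
move=> hg hj hL L0.
apply/eqP; rewrite -subr_eq0; apply/eqP.
set X := dotv v (Hf p *m u) - dotv u (Hf p *m v).
set a := enorm u; set b := enorm v.
have a0 : 0 <= a by apply: enorm_ge0.
have b0 : 0 <= b by apply: enorm_ge0.
set C := L / 2 * a ^+ 2 * b + L / 2 * a * b ^+ 2 + L / 3 * b ^+ 3 +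
         (L / 2 * b ^+ 2 * a + L / 2 * b * a ^+ 2 + L / 3 * a ^+ 3).
have C0 : 0 <= C.
  rewrite /C; repeat apply: addr_ge0.
  all: rewrite ?mulr_ge0 ?divr_ge0 ?exprn_ge0 ?invr_ge0 ?ler0n //.
apply: (small0 C0).
move=> t t0.
have A1 := D2_bound p (t *: u) (t *: v) hg hj hL L0.
have A2 := D2_bound p (t *: v) (t *: u) hg hj hL L0.
rewrite (addrAC p (t *: v)) in A2.
rewrite !enormZ (ger0_norm (ltW t0)) -/a -/b in A1 A2.
rewrite -!scalemxAr !dotvZl !dotvZr in A1 A2.
have H2 : `|t ^+ 2 * X| <= t ^+ 3 * C.
  rewrite ler_norml in A1; rewrite ler_norml in A2; rewrite ler_norml.
  move: A1 A2 => /andP [A1 A1'] /andP [A2 A2'].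
  apply/andP; split; rewrite /X /C; lra.
rewrite normrM ger0_norm ?sqr_ge0 // (_ : t ^+ 3 * C = t ^+ 2 * (t * C)) in H2; last by ring.
by rewrite ler_pM2l ?exprn_gt0 // in H2.
Qed.

Lemma qmodel_shift x (c : R) g H s :
  qmodel x c g H (x + s) = c + dotv g s + 2^-1 * dotv s (H *m s).
Proof. by rewrite /qmodel (addrC x s) addrK. Qed.

Lemma inball_shift x (D : R) s : enorm s <= D -> inball x D (x + s).
Proof. by rewrite /inball (addrC x s) addrK. Qed.

Lemma inball_shiftE x (D : R) s : inball x D (x + s) -> enorm s <= D.
Proof. by rewrite /inball (addrC x s) addrK. Qed.

End L.

Theorem lemma5p1 (R : realType) (n : nat) (x : 'cV[R]_n) (c : R)
    (g : 'cV[R]_n) (H : 'M[R]_n) (D : R) :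
  H^T = H -> 0 < D ->
  (* (a) *)
  (forall (f : 'cV[R]_n -> R) (gf : 'cV[R]_n -> 'cV[R]_n) (Lg kappa : R),
     (exists b : R, forall y, b <= f y) ->
     (forall y, is_gradient f (gf y) y) ->
     0 <= Lg -> (forall y z, enorm (gf y - gf z) <= Lg * enorm (y - z)) ->
     0 < kappa ->
     (forall y, inball x D y ->
        `|qmodel x c g H y - f x - dotv (gf x) (y - x)| <= kappa * D ^+ 2) ->
     forall kappaH : R, opnorm H <= kappaH ->
     forall y, inball x D y ->
       `|qmodel x c g H y - f y| <= (kappa + Lg / 2) * D ^+ 2 /\
       enorm (qmodel_grad x g H y - gf y)
         <= (2 * kappa + Lg + 2 * kappaH) * D) /\
  (* (b) *)
  (forall (f : 'cV[R]_n -> R) (gf : 'cV[R]_n -> 'cV[R]_n)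
          (Hf : 'cV[R]_n -> 'M[R]_n) (LH kappa : R),
     (exists b : R, forall y, b <= f y) ->
     (forall y, is_gradient f (gf y) y) ->
     (forall y, is_jacobian gf (Hf y) y) ->
     0 <= LH -> (forall y z, opnorm (Hf y - Hf z) <= LH * enorm (y - z)) ->
     0 < kappa ->
     (forall y, inball x D y ->
        `|qmodel x c g H y - f x - dotv (gf x) (y - x)
           - 2^-1 * dotv (y - x) (Hf x *m (y - x))| <= kappa * D ^+ 3) ->
     forall y, inball x D y ->
       [/\ `|qmodel x c g H y - f y| <= (kappa + LH / 6) * D ^+ 3,
           enorm (qmodel_grad x g H y - gf y) <= (34 * kappa + LH / 2) * D ^+ 2
         & opnorm (H - Hf y) <= (24 * kappa + LH) * D]).

Proof.
move=> HT D0; split.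
- move=> f gf Lg kappa _ hg L0 hL k0 hm kH hkH y.
  have [s ->] : exists s, y = x + s by exists (y - x); rewrite addrC subrK.
  move=> /inball_shiftE hs.
  have s0 := enorm_ge0 s.
  have T1 := taylor1 x s hg hL L0.
  have phi : forall s', enorm s' <= D ->
      `|(c - f x) + dotv (g - gf x) s' + 2^-1 * dotv s' (H *m s')| <= kappa * D ^+ 2.
    move=> s' hs'; have := hm (x + s') (inball_shift x hs').
    apply: le_norm_eq => //; rewrite qmodel_shift (addrC x s') addrK dotvBl; ring.
  have M := phi s hs.
  have hb : enorm (g - gf x) <= kappa * D.
    have := dual_bound D0 (K := kappa * D ^+ 2) (b := g - gf x) _.
    rewrite (_ : kappa * D ^+ 2 = kappa * D * D); last by ring.
    rewrite ler_pM2r //; apply => s' hs'.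
    have P1 := phi s' hs'.
    have P2 := phi (- s'); rewrite enormN in P2; have {P2} P2 := P2 hs'.
    rewrite mulmxN dotvNl !dotvNr opprK in P2.
    rewrite ler_norml in P1; rewrite ler_norml in P2; rewrite ler_norml.
    move: P1 P2 => /andP [P1 P1'] /andP [P2 P2']; apply/andP; split; lra.
  have sD2 : enorm s ^+ 2 <= D ^+ 2 by rewrite lerXn2r // ?nnegrE ?(ltW D0).
  have kH0 : 0 <= kH := le_trans (opnorm_ge0 H) hkH.
  split.
    rewrite (_ : qmodel x c g H (x + s) - f (x + s) =
       (c - f x + dotv (g - gf x) s + 2^-1 * dotv s (H *m s)) -
       (f (x + s) - f x - dotv (gf x) s)); last first.
      by rewrite qmodel_shift dotvBl; ring.
    have : Lg / 2 * enorm s ^+ 2 <= Lg / 2 * D ^+ 2 by rewrite ler_wpM2l ?divr_ge0.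
    rewrite ler_norml in M; rewrite ler_norml in T1; rewrite ler_norml.
    move: M T1 => /andP [M M'] /andP [T T'] h; apply/andP; split; lra.
  rewrite /qmodel_grad (_ : x + s - x = s); last by rewrite (addrC x s) addrK.
  rewrite (_ : g + H *m s - gf (x + s) = (g - gf x) + H *m s - (gf (x + s) - gf x)); last first.
    by symmetry; rewrite opprB (addrAC g) addrA subrK.
  apply: (le_trans (enormB _ _)); apply: (le_trans (lerD (enormD _ _) (lexx _))).
  have h1 : enorm (H *m s) <= kH * D.
    apply: (le_trans (opnorm_bound _ _)); apply: ler_pM => //; exact: opnorm_ge0.
  have h2 : enorm (gf (x + s) - gf x) <= Lg * D.
    apply: (le_trans (hL _ _)); rewrite (addrC x s) addrK; exact: ler_wpM2l.
  have : 0 <= kappa * D by apply: mulr_ge0 => //; exact: ltW.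
  have : 0 <= kH * D by apply: mulr_ge0 => //; exact: ltW.
  lra.
move=> f gf Hf LH kappa _ hg hj L0 hL k0 hm y.
have [s ->] : exists s, y = x + s by exists (y - x); rewrite addrC subrK.
move=> /inball_shiftE hs.
have s0 := enorm_ge0 s.
set b := g - gf x; set A := H - Hf x.
have phi : forall s', enorm s' <= D ->
    `|(c - f x) + dotv b s' + 2^-1 * dotv s' (A *m s')| <= kappa * D ^+ 3.
  move=> s' hs'; have := hm (x + s') (inball_shift x hs').
  apply: le_norm_eq => //; rewrite qmodel_shift (addrC x s') addrK /b /A dotvBl mulmxBl dotvBr; ring.
have phiN : forall s', enorm s' <= D ->
    `|(c - f x) - dotv b s' + 2^-1 * dotv s' (A *m s')| <= kappa * D ^+ 3.
  move=> s' hs'; have := phi (- s'); rewrite enormN => /(_ hs').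
  by rewrite mulmxN dotvNl !dotvNr opprK.
have phi0 : `|c - f x| <= kappa * D ^+ 3.
  have := phi 0; rewrite enorm0 dotv0r mulmx0 dotv0r mulr0 !addr0; apply; exact: ltW.
have hb : enorm b <= kappa * D ^+ 2.
  have := dual_bound D0 (K := kappa * D ^+ 3) (b := b) _.
  rewrite (_ : kappa * D ^+ 3 = kappa * D ^+ 2 * D); last by ring.
  rewrite ler_pM2r //; apply => s' hs'.
  have P1 := phi s' hs'; have P2 := phiN s' hs'.
  rewrite ler_norml in P1; rewrite ler_norml in P2; rewrite ler_norml.
  move: P1 P2 => /andP [P1 P1'] /andP [P2 P2']; apply/andP; split; lra.
have hq : forall s', enorm s' <= D -> `|dotv s' (A *m s')| <= 4 * kappa * D ^+ 3.
  move=> s' hs'.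
  have P1 := phi s' hs'; have P2 := phiN s' hs'; have P0 := phi0.
  rewrite ler_norml in P1; rewrite ler_norml in P2; rewrite ler_norml in P0; rewrite ler_norml.
  move: P1 P2 P0 => /andP [P1 P1'] /andP [P2 P2'] /andP [P0 P0']; apply/andP; split; lra.
have hq' := quad_scale D0 hq.
rewrite (_ : 4 * kappa * D ^+ 3 / D ^+ 2 = 4 * kappa * D) in hq'; last first.
  by field; rewrite gt_eqF.
have Asym : forall u v, dotv u (A *m v) = dotv v (A *m u).
  move=> u v; rewrite /A !mulmxBl !dotvBr dotv_mx HT dotvC.
  by rewrite (hess_sym x v u hg hj hL L0).
have hA := symq_bound Asym hq'.
have T2 := taylor2 x s hg hj hL L0.
have TG := taylorG x s hj hL L0.
have sD2 : enorm s ^+ 2 <= D ^+ 2 by rewrite lerXn2r // ?nnegrE ?(ltW D0).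
have sD3 : enorm s ^+ 3 <= D ^+ 3 by rewrite lerXn2r // ?nnegrE ?(ltW D0).
have k0' := ltW k0.
split.
- rewrite (_ : qmodel x c g H (x + s) - f (x + s) =
     (c - f x + dotv b s + 2^-1 * dotv s (A *m s)) -
     (f (x + s) - f x - dotv (gf x) s - 2^-1 * dotv s (Hf x *m s))); last first.
    by rewrite qmodel_shift /b /A dotvBl mulmxBl dotvBr; ring.
  have : LH / 6 * enorm s ^+ 3 <= LH / 6 * D ^+ 3 by rewrite ler_wpM2l ?divr_ge0.
  have M := phi s hs.
  rewrite ler_norml in M; rewrite ler_norml in T2; rewrite ler_norml.
  move: M T2 => /andP [M M'] /andP [T T'] h; apply/andP; split; lra.
- rewrite /qmodel_grad (_ : x + s - x = s); last by rewrite (addrC x s) addrK.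
  rewrite (_ : g + H *m s - gf (x + s) = b + A *m s - (gf (x + s) - gf x - Hf x *m s)); last first.
    by apply/matrixP => i j; rewrite /b /A mulmxBl !mxE; ring.
  apply: (le_trans (enormB _ _)); apply: (le_trans (lerD (enormD _ _) (lexx _))).
  have h1 : enorm (A *m s) <= 4 * kappa * D * D.
    apply: (le_trans (hA s)); apply: ler_wpM2l => //; have := mulr_gt0 k0 D0; lra.
  have : LH / 2 * enorm s ^+ 2 <= LH / 2 * D ^+ 2 by rewrite ler_wpM2l ?divr_ge0.
  have : 0 <= kappa * D ^+ 2 by rewrite mulr_ge0 // exprn_ge0 // ltW.
  lra.
- apply: opnorm_le => v hv.
  rewrite (_ : (H - Hf (x + s)) *m v = A *m v + (Hf x - Hf (x + s)) *m v); last first.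
    rewrite /A -mulmxDl; congr (_ *m _).
    by apply/matrixP => i j; rewrite !mxE; ring.
  apply: (le_trans (enormD _ _)).
  have h1 : enorm (A *m v) <= 4 * kappa * D.
    apply: (le_trans (hA v)); rewrite -[X in _ <= X]mulr1; apply: ler_wpM2l => //.
    have := mulr_gt0 k0 D0; lra.
  have h2 : enorm ((Hf x - Hf (x + s)) *m v) <= LH * D.
    apply: (le_trans (opnorm_bound _ _)).
    apply: (le_trans (ler_wpM2l (opnorm_ge0 _) hv)); rewrite mulr1.
    apply: (le_trans (hL _ _)).
    rewrite (_ : x - (x + s) = - s); last by rewrite opprD addrA subrr add0r.
    by rewrite enormN ler_wpM2l.
  have : 0 <= kappa * D by apply: mulr_ge0 => //; exact: ltW.
  lra.
Qed.
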